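(* Let $\varphi=\nu\tilde n.\sigma$ be a frame well-formed with respect to $\mathtt{s}\in\tilde n$ such that $\varphi\nvdash\mathtt{s}$. Let $U$ be a term with all variables in $\mathrm{dom}(\varphi)$ and $M$ a closed term in normal form, such that $U$ and $M$ are public with respect to $\varphi$. If $U\sigma[\mathtt{s}/M]\rightarrow V$ for some term $V$, then there exists a frame $\varphi'=\nu\tilde n.\sigma'$ well-formed with respect to $\mathtt{s}$ such that: $x\sigma'=x\sigma$ for all $x\in\mathrm{dom}(\sigma)$; for every term $W$, $\varphi\vdash W$ iff $\varphi'\vdash W$; and $V=V'\sigma'[\mathtt{s}/M]$ and $U\sigma\rightarrow V'\sigma'$ for some term $V'$ public with respect to $\varphi'$.
   Context: Terms over $\Sigma=\{\mathsf{enc}/3,\mathsf{dec}/2,\mathsf{enca}/3,\mathsf{deca}/2,\mathsf{pub}/1,\mathsf{priv}/1,\langle\cdot,\cdot\rangle/2,\pi_1/1,\pi_2/1,\mathsf{sign}/2,\mathsf{check}/3,\mathsf{retrieve}/1\}$, constants (including $\mathsf{ok}$), names and variables; destructors are $\pi_1,\pi_2,\mathsf{dec},\mathsf{deca},\mathsf{check},\mathsf{retrieve}$. The rewrite system $\mathcal R_E$ consists of $\pi_i(\langle z_1,z_2\rangle)\to z_i$ ($i=1,2$), $\mathsf{dec}(\mathsf{enc}(z_1,z_2,z_3),z_2)\to z_1$, $\mathsf{deca}(\mathsf{enca}(z_1,\mathsf{pub}(z_2),z_3),\mathsf{priv}(z_2))\to z_1$, $\mathsf{check}(z_1,\mathsf{sign}(z_1,\mathsf{priv}(z_2)),\mathsf{pub}(z_2))\to\mathsf{ok}$,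 $\mathsf{retrieve}(\mathsf{sign}(z_1,z_2))\to z_1$; it is convergent, $=_E$ is its induced equality, and $U\to V$ denotes one rewrite step at some position. A frame $\varphi=\nu\tilde n.\sigma$: finite set of restricted names $\tilde n$ and acyclic substitution $\sigma$. Public term w.r.t. $\varphi$: contains no name of $\tilde n$ and no $\mathsf{priv}$. $\varphi\vdash M$: least relation containing $x\sigma$ ($x\in\mathrm{dom}(\sigma)$) and names outside $\tilde n$, closed under applying symbols other than $\mathsf{priv}$ and under $=_E$. $T[\mathtt{s}/M]$ replaces each occurrence of $\mathtt{s}$ by $M$. Positions are sequences of positive integers, $T|_p$ the subterm at $p$. An encryption occurrence $q$ in $U$ (head of $U|_q$ in $\{\mathsf{enc},\mathsf{enca}\}$) is an agent encryption w.r.t. names $\tilde m$ if $U|_{q\cdot3}\in\tilde m$, and a probabilistic encryption w.r.t. a set of terms $S$ if for all $V\in S$ and $p$ with $V|_p=U|_{q\cdot3}$, $p=q'\cdot3$ with $V|_{q'}=U|_q$. $\varphi$ is well-formed w.r.t. $\mathtt{s}$ if (1) every encryption in $\sigma$ is an agent encryption w.r.t. $\tilde n\setminus\{\mathtt{s}\}$ and a probabilistic encryption w.r.t. $\mathrm{ran}(\sigma)$; (2) for all subterms $\mathsf{enc}(M,K,R)$, $\mathsf{enca}(M',K',R')$, $\mathsf{sign}(U,V)$, $\mathsf{pub}(W)$, $\mathsf{priv}(W')$ of $\varphi$, $\mathtt{s}$ does not occur in $K,K',V,W,W',R,R'$; (3) $\varphi$ contains no destructor. *)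

(* Defs.v *)
From Stdlib Require Import List Arith Relations.
Import ListNotations.

Inductive term : Type :=
| Var (x : nat)
| Nm (a : nat)
| Cst (c : nat)
| Enc (m k r : term)
| Dec (c k : term)
| Enca (m k r : term)
| Deca (c k : term)
| Pub (t : term)
| Priv (t : term)
| Pair (a b : term)
| Pi1 (t : term)
| Pi2 (t : term)
| Sign (m k : term)
| Check (m s k : term)
| Retrieve (t : term).

Definition ok : term := Cst 0.

Definition children (t : term) : list term :=
  match t with
  | Var _ | Nm _ | Cst _ => []
  | Enc a b c => [a; b; c]
  | Dec a b => [a; b]
  | Enca a b c => [a; b; c]
  | Deca a b => [a; b]
  | Pub a => [a]
  | Priv a => [a]
  | Pair a b => [a; b]
  | Pi1 a => [a]
  | Pi2 a => [a]
  | Sign a b => [a; b]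
  | Check a b c => [a; b; c]
  | Retrieve a => [a]
  end.

Definition rebuild (t : term) (cs : list term) : term :=
  let a i := nth i cs (Cst 0) in
  match t with
  | Var _ | Nm _ | Cst _ => t
  | Enc _ _ _ => Enc (a 0) (a 1) (a 2)
  | Dec _ _ => Dec (a 0) (a 1)
  | Enca _ _ _ => Enca (a 0) (a 1) (a 2)
  | Deca _ _ => Deca (a 0) (a 1)
  | Pub _ => Pub (a 0)
  | Priv _ => Priv (a 0)
  | Pair _ _ => Pair (a 0) (a 1)
  | Pi1 _ => Pi1 (a 0)
  | Pi2 _ => Pi2 (a 0)
  | Sign _ _ => Sign (a 0) (a 1)
  | Check _ _ _ => Check (a 0) (a 1) (a 2)
  | Retrieve _ => Retrieve (a 0)
  end.

(* Positions: sequences of positive integers; T|_p *)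
Fixpoint subterm_at (t : term) (p : list nat) : option term :=
  match p with
  | [] => Some t
  | i :: p' =>
      match i with
      | 0 => None
      | S j => match nth_error (children t) j with
               | Some c => subterm_at c p'
               | None => None
               end
      end
  end.

Fixpoint replace_at (t : term) (p : list nat) (r : term) : term :=
  match p with
  | [] => r
  | i :: p' =>
      match i with
      | 0 => t
      | S j => match nth_error (children t) j with
               | Some c => rebuild t (firstn j (children t) ++
                                      replace_at c p' r :: skipn (S j) (children t))
               | None => t
               end
      end
  end.

Inductive root_step : term -> term -> Prop :=
| rs_pi1 z1 z2 : root_step (Pi1 (Pair z1 z2)) z1
| rs_pi2 z1 z2 : root_step (Pi2 (Pair z1 z2)) z2
| rs_dec z1 z2 z3 : root_step (Dec (Enc z1 z2 z3) z2) z1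
| rs_deca z1 z2 z3 : root_step (Deca (Enca z1 (Pub z2) z3) (Priv z2)) z1
| rs_check z1 z2 : root_step (Check z1 (Sign z1 (Priv z2)) (Pub z2)) ok
| rs_retrieve z1 z2 : root_step (Retrieve (Sign z1 z2)) z1.

Definition step (U V : term) : Prop :=
  exists p l r, subterm_at U p = Some l /\ root_step l r /\ V = replace_at U p r.

Definition eqE : term -> term -> Prop := clos_refl_sym_trans term step.

Definition normal_form (t : term) : Prop := forall V, ~ step t V.

Fixpoint tmap (f : term -> term) (t : term) : term :=
  match t with
  | Var _ | Nm _ | Cst _ => f t
  | Enc a b c => Enc (tmap f a) (tmap f b) (tmap f c)
  | Dec a b => Dec (tmap f a) (tmap f b)
  | Enca a b c => Enca (tmap f a) (tmap f b) (tmap f c)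
  | Deca a b => Deca (tmap f a) (tmap f b)
  | Pub a => Pub (tmap f a)
  | Priv a => Priv (tmap f a)
  | Pair a b => Pair (tmap f a) (tmap f b)
  | Pi1 a => Pi1 (tmap f a)
  | Pi2 a => Pi2 (tmap f a)
  | Sign a b => Sign (tmap f a) (tmap f b)
  | Check a b c => Check (tmap f a) (tmap f b) (tmap f c)
  | Retrieve a => Retrieve (tmap f a)
  end.

Definition rename_name (s : nat) (M : term) (t : term) : term :=
  tmap (fun u => match u with Nm a => if Nat.eqb a s then M else u | _ => u end) t.

Definition subst_t := list (nat * term).
Definition dom (σ : subst_t) : list nat := map fst σ.
Definition ran (σ : subst_t) : list term := map snd σ.
Definition lookup (σ : subst_t) (x : nat) : option term :=
  match find (fun b => Nat.eqb (fst b) x) σ with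
  | Some (_, v) => Some v
  | None => None
  end.
Definition subst (σ : subst_t) (t : term) : term :=
  tmap (fun u => match u with
                 | Var x => match lookup σ x with Some v => v | None => u end
                 | _ => u end) t.

Definition closed (t : term) : Prop := forall p x, subterm_at t p <> Some (Var x).

(* A frame nu n~. sigma: sigma has pairwise distinct domain variables and
   ground range terms (hence it is trivially acyclic). *)
Definition frame_subst (σ : subst_t) : Prop :=
  NoDup (dom σ) /\ forall v, In v (ran σ) -> closed v.

Definition occurs_name (a : nat) (t : term) : Prop :=
  exists p, subterm_at t p = Some (Nm a).

Definition public (ns : list nat) (t : term) : Prop :=
  (forall a, In a ns -> ~ occurs_name a t) /\
  (forall p u, subterm_at t p <> Some (Priv u)).

Definition app_not_priv (t : term) : Prop :=
  match t with Var _ | Nm _ | Priv _ => False | _ => True end.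

Inductive ded (ns : list nat) (σ : subst_t) : term -> Prop :=
| ded_var x : In x (dom σ) -> ded ns σ (subst σ (Var x))
| ded_name a : ~ In a ns -> ded ns σ (Nm a)
| ded_app t : app_not_priv t -> (forall c, In c (children t) -> ded ns σ c) -> ded ns σ t
| ded_eq t t' : ded ns σ t -> eqE t t' -> ded ns σ t'.

Definition is_enc (u : term) : Prop :=
  match u with Enc _ _ _ | Enca _ _ _ => True | _ => False end.

Definition agent_enc (m : list nat) (U : term) (q : list nat) : Prop :=
  exists a, subterm_at U (q ++ [3]) = Some (Nm a) /\ In a m.

Definition prob_enc (S : list term) (U : term) (q : list nat) : Prop :=
  forall V p, In V S -> subterm_at V p = subterm_at U (q ++ [3]) ->
    exists q', p = q' ++ [3] /\ subterm_at V q' = subterm_at U q.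

Definition is_destructor (u : term) : Prop :=
  match u with
  | Pi1 _ | Pi2 _ | Dec _ _ | Deca _ _ | Check _ _ _ | Retrieve _ => True
  | _ => False end.

Definition keys_free_of (s : nat) (u : term) : Prop :=
  match u with
  | Enc _ k r | Enca _ k r => ~ occurs_name s k /\ ~ occurs_name s r
  | Sign _ v => ~ occurs_name s v
  | Pub w | Priv w => ~ occurs_name s w
  | _ => True
  end.

Definition well_formed (ns : list nat) (σ : subst_t) (s : nat) : Prop :=
  (forall V q u, In V (ran σ) -> subterm_at V q = Some u -> is_enc u ->
     agent_enc (remove Nat.eq_dec s ns) V q /\ prob_enc (ran σ) V q) /\
  (forall V q u, In V (ran σ) -> subterm_at V q = Some u -> keys_free_of s u) /\
  (forall V q u, In V (ran σ) -> subterm_at V q = Some u -> ~ is_destructor u).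

(* Main.v *)
Require Import Defs.
From Stdlib Require Import List Arith Lia Relations Classical.
Import ListNotations.

Definition leaf (t : term) : Prop := match t with Var _ | Nm _ | Cst _ => True | _ => False end.

Lemma leaf_dec t : leaf t \/ ~ leaf t.
Proof. destruct t; simpl; tauto. Qed.

Lemma rebuild_children t : rebuild t (children t) = t.
Proof. destruct t; reflexivity. Qed.

Lemma children_rebuild t L : length L = length (children t) -> children (rebuild t L) = L.
Proof.
  destruct t; simpl; intro H;
  repeat (destruct L as [|? L]; simpl in H; try discriminate); reflexivity.
Qed.

Lemma rebuild_rebuild t L L' : rebuild (rebuild t L) L' = rebuild t L'.
Proof. destruct t; reflexivity. Qed.

Lemma leaf_children t : leaf t -> children t = [].
Proof. destruct t; simpl; tauto. Qed.

Lemma nonleaf_rebuild t L : ~ leaf t -> ~ leaf (rebuild t L).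
Proof. destruct t; simpl; tauto. Qed.

Lemma tmap_leaf f t : leaf t -> tmap f t = f t.
Proof. destruct t; simpl; tauto. Qed.

Lemma tmap_nonleaf f t : ~ leaf t -> tmap f t = rebuild t (map (tmap f) (children t)).
Proof. destruct t; simpl; intros H; try (exfalso; apply H; exact I); reflexivity. Qed.

Lemma children_tmap f t : ~ leaf t -> children (tmap f t) = map (tmap f) (children t).
Proof. destruct t; simpl; intros H; try (exfalso; apply H; exact I); reflexivity. Qed.

Lemma nonleaf_tmap f t : ~ leaf t -> ~ leaf (tmap f t).
Proof. destruct t; simpl; tauto. Qed.

Lemma rebuild_tmap f t L : ~ leaf t -> rebuild (tmap f t) L = rebuild t L.
Proof. destruct t; simpl; intros H; try (exfalso; apply H; exact I); reflexivity. Qed.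

Lemma term_ind' (P : term -> Prop) :
  (forall t, (forall c, In c (children t) -> P c) -> P t) -> forall t, P t.
Proof.
  intros H t; induction t; apply H; simpl; intros c0 Hc;
  repeat (destruct Hc as [Hc|Hc]; [subst; assumption|]); contradiction.
Qed.

Lemma subterm_at_cons t j p : subterm_at t (S j :: p) =
  match nth_error (children t) j with Some c => subterm_at c p | None => None end.
Proof. reflexivity. Qed.

Lemma subterm_at_app t p q : subterm_at t (p ++ q) =
  match subterm_at t p with Some u => subterm_at u q | None => None end.
Proof.
  revert t; induction p as [|i p IH]; intro t; simpl; [reflexivity|].
  destruct i; [reflexivity|]. destruct (nth_error (children t) i); [apply IH|reflexivity].
Qed.

Lemma subterm_at_app_some t p q u : subterm_at t p = Some u ->
  subterm_at t (p ++ q) = subterm_at u q.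
Proof. intro H. rewrite subterm_at_app, H. reflexivity. Qed.

Lemma nth_error_nil' {A} j : nth_error (@nil A) j = None.
Proof. destruct j; reflexivity. Qed.

Lemma subterm_at_leaf t p u : leaf t -> subterm_at t p = Some u -> p = [] /\ u = t.
Proof.
  intros Hl H. destruct p as [|i p]. simpl in H; inversion H; auto.
  destruct i; simpl in H; [discriminate|]. rewrite leaf_children, nth_error_nil' in H by auto.
  discriminate.
Qed.

Lemma valid_nonleaf t j p u : subterm_at t (S j :: p) = Some u -> ~ leaf t.
Proof.
  intros H Hl. simpl in H. rewrite leaf_children, nth_error_nil' in H by auto. discriminate.
Qed.

Lemma tm1 f t q u : subterm_at t q = Some u -> subterm_at (tmap f t) q = Some (tmap f u).
Proof.
  revert t; induction q as [|i q IH]; intros t H.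
  - simpl in *. congruence.
  - destruct i; [discriminate|].
    assert (NL : ~ leaf t) by (eapply valid_nonleaf; eauto).
    simpl in *. destruct (nth_error (children t) i) eqn:E; [|discriminate].
    rewrite children_tmap by auto. rewrite nth_error_map, E. simpl. apply IH; auto.
Qed.

Lemma tm3 f t q u : subterm_at (tmap f t) q = Some u ->
  (exists q1 q2 l, q = q1 ++ q2 /\ subterm_at t q1 = Some l /\ leaf l /\ subterm_at (f l) q2 = Some u) \/
  (exists u0, subterm_at t q = Some u0 /\ ~ leaf u0 /\ u = tmap f u0).
Proof.
  revert t; induction q as [|i q IH]; intros t H.
  - simpl in H. inversion H; subst. destruct (leaf_dec t) as [Hl|Hl].
    + left. exists [], [], t. rewrite tmap_leaf by auto. simpl. auto.
    + right. exists t. simpl. auto.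
  - destruct (leaf_dec t) as [Hl|Hl].
    + left. exists [], (i :: q), t. rewrite tmap_leaf in H by auto. simpl. auto.
    + destruct i; [discriminate|]. simpl in H. rewrite children_tmap, nth_error_map in H by auto.
      destruct (nth_error (children t) i) eqn:E; simpl in H; [|discriminate].
      destruct (IH _ H) as [(q1 & q2 & l & E1 & E2 & E3 & E4)|(u0 & E1 & E2 & E3)].
      * left. exists (S i :: q1), q2, l. subst. simpl. rewrite E. auto.
      * right. exists u0. simpl. rewrite E. auto.
Qed.

Lemma tm2 f t q1 q2 l u : subterm_at t q1 = Some l -> leaf l -> subterm_at (f l) q2 = Some u ->
  subterm_at (tmap f t) (q1 ++ q2) = Some u.
Proof.
  intros H1 Hl H2. rewrite (subterm_at_app_some _ _ _ _ (tm1 f _ _ _ H1)).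
  rewrite tmap_leaf by auto. exact H2.
Qed.

Definition upd (j : nat) (x : term) (l : list term) := firstn j l ++ x :: skipn (S j) l.

Lemma upd_split j l c x : nth_error l j = Some c ->
  exists l1 l2, l = l1 ++ c :: l2 /\ length l1 = j /\ upd j x l = l1 ++ x :: l2.
Proof.
  revert j; induction l as [|a l IH]; intros j H; destruct j; simpl in H; try discriminate.
  - inversion H; subst. exists [], l. split; auto.
  - destruct (IH j H) as (l1 & l2 & E1 & E2 & E3). exists (a :: l1), l2. subst.
    split; [reflexivity|]. split; [reflexivity|].
    change (upd (S (length l1)) x (a :: l1 ++ c :: l2)) with (a :: upd (length l1) x (l1 ++ c :: l2)).
    rewrite E3. reflexivity.
Qed.

Lemma map_upd f j x l : map f (upd j x l) = upd j (f x) (map f l).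
Proof. unfold upd. rewrite map_app. cbn [map]. rewrite firstn_map, skipn_map. reflexivity. Qed.

Lemma upd_length j x l c : nth_error l j = Some c -> length (upd j x l) = length l.
Proof.
  intro H. destruct (upd_split j l c x H) as (l1 & l2 & E1 & E2 & E3). rewrite E3, E1.
  rewrite !length_app. reflexivity.
Qed.

Lemma replace_cons t j p r : replace_at t (S j :: p) r =
  match nth_error (children t) j with
  | Some c => rebuild t (upd j (replace_at c p r) (children t)) | None => t end.
Proof. reflexivity. Qed.

Lemma rp1 f t p r u : subterm_at t p = Some u ->
  tmap f (replace_at t p r) = replace_at (tmap f t) p (tmap f r).
Proof.
  revert t; induction p as [|i p IH]; intros t H; [reflexivity|].
  destruct i; [discriminate|].
  assert (NL : ~ leaf t) by (eapply valid_nonleaf; eauto).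
  simpl in H. destruct (nth_error (children t) i) eqn:E; [|discriminate].
  rewrite !replace_cons. rewrite E. rewrite children_tmap by auto. rewrite nth_error_map, E. simpl.
  rewrite rebuild_tmap by auto.
  rewrite (tmap_nonleaf f (rebuild _ _)) by (apply nonleaf_rebuild; auto).
  rewrite children_rebuild by (eapply upd_length; eauto).
  rewrite rebuild_rebuild. f_equal. rewrite map_upd. rewrite (IH _ H). reflexivity.
Qed.

Definition Psub (P : term -> Prop) t := forall q u, subterm_at t q = Some u -> P u.

Lemma Psub_root P t : Psub P t -> P t.
Proof. intro H. apply (H []). reflexivity. Qed.

Lemma Psub_sub P t q u : Psub P t -> subterm_at t q = Some u -> Psub P u.
Proof. intros H Hq q' v Hv. apply (H (q ++ q')). rewrite (subterm_at_app_some _ _ _ _ Hq). exact Hv. Qed.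

Lemma Psub_child P t j c : Psub P t -> nth_error (children t) j = Some c -> Psub P c.
Proof. intros H E. apply (Psub_sub P t [S j]); auto. simpl. rewrite E. reflexivity. Qed.

Lemma Psub_mono (P Q : term -> Prop) t : (forall u, P u -> Q u) -> Psub P t -> Psub Q t.
Proof. intros H1 H2 q u Hq. apply H1. eapply H2; eauto. Qed.

Lemma nth_error_mid_other (l1 l2 : list term) x y k : k <> length l1 ->
  nth_error (l1 ++ x :: l2) k = nth_error (l1 ++ y :: l2) k.
Proof.
  intro H. rewrite !nth_error_app. destruct (Nat.ltb k (length l1)) eqn:Hlt; [reflexivity|].
  apply Nat.ltb_ge in Hlt.
  destruct (k - length l1) eqn:E; [lia|reflexivity].
Qed.

Lemma Psub_replace P (HP : forall t L, ~ leaf t -> P t -> P (rebuild t L)) t p w u :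
  subterm_at t p = Some u -> Psub P t -> Psub P w -> Psub P (replace_at t p w).
Proof.
  revert t; induction p as [|i p IH]; intros t H Ht Hw; [exact Hw|].
  destruct i; [discriminate|].
  assert (NL : ~ leaf t) by (eapply valid_nonleaf; eauto).
  simpl in H. destruct (nth_error (children t) i) eqn:E; [|discriminate].
  rewrite replace_cons, E.
  destruct (upd_split i (children t) t0 (replace_at t0 p w) E) as (l1 & l2 & E1 & E2 & E3).
  rewrite E3. intros q v Hq. destruct q as [|k q].
  - simpl in Hq. inversion Hq; subst. apply HP; auto. apply (Psub_root _ _ Ht).
  - destruct k; [discriminate|]. simpl in Hq.
    rewrite children_rebuild in Hq by (rewrite E1, !length_app; reflexivity).
    destruct (Nat.eq_dec k i).
    + subst. rewrite nth_error_app2 in Hq by lia. rewrite Nat.sub_diag in Hq. simpl in Hq.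
      apply (IH t0 H (Psub_child _ _ _ _ Ht E) Hw q v Hq).
    + rewrite (nth_error_mid_other _ _ _ t0) in Hq by lia. rewrite <- E1 in Hq.
      destruct (nth_error (children t) k) eqn:E4; [|discriminate].
      apply (Psub_child _ _ _ _ Ht E4 q v Hq).
Qed.

Lemma tmap_ext f g t : (forall q l, subterm_at t q = Some l -> leaf l -> f l = g l) ->
  tmap f t = tmap g t.
Proof.
  induction t; intro H; simpl;
  try (apply (H []); [reflexivity|exact I]);
  f_equal;
  match goal with IH : (forall q l, subterm_at ?a q = Some l -> leaf l -> _) -> _ |- _ =>
    apply IH end;
  intros q l Hq Hl;
  first [exact (H (1::q) l Hq Hl) | exact (H (2::q) l Hq Hl) | exact (H (3::q) l Hq Hl)].
Qed.

Lemma tmap_tmap f g t : tmap g (tmap f t) = tmap (fun u => tmap g (f u)) t.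
Proof. induction t; simpl; congruence. Qed.

Lemma lookup_cons b l x : lookup (b :: l) x = if Nat.eqb (fst b) x then Some (snd b) else lookup l x.
Proof. unfold lookup. simpl. destruct b as [a v]. simpl. destruct (Nat.eqb a x); reflexivity. Qed.

Lemma lookup_dom l x : In x (dom l) -> exists v, lookup l x = Some v /\ In v (ran l).
Proof.
  induction l as [|[a v] l IH]; simpl; intro H; [contradiction|].
  rewrite lookup_cons. simpl. destruct (Nat.eqb a x) eqn:E.
  - exists v. auto.
  - destruct H as [H|H]. subst. rewrite Nat.eqb_refl in E. discriminate.
    destruct (IH H) as (w & E1 & E2). exists w. auto.
Qed.

Lemma lookup_in l x v : NoDup (dom l) -> In (x, v) l -> lookup l x = Some v.
Proof.
  induction l as [|[a w] l IH]; simpl; intros H1 H2; [contradiction|].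
  inversion H1; subst. rewrite lookup_cons. simpl. destruct H2 as [H2|H2].
  - inversion H2; subst. rewrite Nat.eqb_refl. reflexivity.
  - destruct (Nat.eqb a x) eqn:E.
    + apply Nat.eqb_eq in E. subst. exfalso. apply H3. apply (in_map fst) in H2. exact H2.
    + apply IH; auto.
Qed.

Lemma lookup_app_l l t x : In x (dom l) -> lookup (l ++ t) x = lookup l x.
Proof.
  induction l as [|[a w] l IH]; simpl; intro H; [contradiction|].
  rewrite !lookup_cons. simpl. destruct (Nat.eqb a x) eqn:E; [reflexivity|].
  destruct H as [H|H]; [subst; rewrite Nat.eqb_refl in E; discriminate|]. auto.
Qed.

Lemma lookup_app_r l t x : ~ In x (dom l) -> lookup (l ++ t) x = lookup t x.
Proof.
  induction l as [|[a w] l IH]; simpl; intro H; [reflexivity|].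
  rewrite lookup_cons. simpl. destruct (Nat.eqb a x) eqn:E.
  - apply Nat.eqb_eq in E. subst. tauto.
  - auto.
Qed.

Lemma tmap_id t : tmap (fun u => u) t = t.
Proof. induction t; simpl; congruence. Qed.

Lemma inv_pi1 a r : root_step (Pi1 a) r -> exists z, a = Pair r z.
Proof. intro H. inversion H; subst. eauto. Qed.
Lemma inv_pi2 a r : root_step (Pi2 a) r -> exists z, a = Pair z r.
Proof. intro H. inversion H; subst. eauto. Qed.
Lemma inv_ret a r : root_step (Retrieve a) r -> exists z, a = Sign r z.
Proof. intro H. inversion H; subst. eauto. Qed.
Lemma inv_dec a b r : root_step (Dec a b) r -> exists z, a = Enc r b z.
Proof. intro H. inversion H; subst. eauto. Qed.
Lemma inv_deca a b r : root_step (Deca a b) r -> exists z2 z3, a = Enca r (Pub z2) z3 /\ b = Priv z2.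
Proof. intro H. inversion H; subst. eauto. Qed.
Lemma inv_check a b c r : root_step (Check a b c) r -> exists z, b = Sign a (Priv z) /\ c = Pub z /\ r = ok.
Proof. intro H. inversion H; subst. eauto. Qed.
Lemma root_step_destr l r : root_step l r -> is_destructor l.
Proof. intro H. inversion H; simpl; auto. Qed.

Lemma destr_tmap f u : ~ leaf u -> is_destructor (tmap f u) -> is_destructor u.
Proof. destruct u; simpl; tauto. Qed.

Lemma enc_third u : is_enc u -> exists c, subterm_at u [3] = Some c.
Proof. destruct u; simpl; try tauto; eauto. Qed.

Lemma enc_nonleaf u : is_enc u -> ~ leaf u.
Proof. destruct u; simpl; tauto. Qed.

Lemma is_enc_same A B : ~ leaf A -> (forall L, rebuild A L = rebuild B L) -> is_enc A -> is_enc B.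
Proof.
  intros NA H HA. rewrite <- (rebuild_children B), <- H. destruct A; simpl in *; tauto.
Qed.

Lemma ded_root ns σ X Y : ded ns σ X -> root_step X Y -> ded ns σ Y.
Proof.
  intros H1 H2. apply ded_eq with X; auto. apply rst_step. exists [], X, Y. auto.
Qed.

Lemma shift_wit P t j c e : nth_error (children t) j = Some c ->
  (exists q q' u, e = q ++ q' /\ subterm_at c q = Some u /\ P u) ->
  exists q q' u, S j :: e = q ++ q' /\ subterm_at t q = Some u /\ P u.
Proof.
  intros E (q & q' & u & E1 & E2 & E3). exists (S j :: q), q', u. subst. simpl. rewrite E. auto.
Qed.

Section Main.
Variables (ns : list nat) (σ : subst_t) (s : nat) (M : term).
Hypotheses (Hfs : frame_subst σ) (Hs : In s ns) (Hwf : well_formed ns σ s)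
  (Hnd : ~ ded ns σ (Nm s)) (HMc : closed M) (HMn : normal_form M) (HMp : public ns M).

Notation R := (rename_name s M).
Notation SB := (subst σ).

Definition SS t := exists V e, In V (ran σ) /\ subterm_at V e = Some t.
Definition SE u := is_enc u /\ SS u.
Definition Prot t := forall e, subterm_at t e = Some (Nm s) ->
  exists q q' u, e = q ++ q' /\ subterm_at t q = Some u /\ SE u.
Definition EncOK t := forall q u, subterm_at t q = Some u -> is_enc u ->
  (exists V e' u', In V (ran σ) /\ subterm_at V e' = Some u' /\ is_enc u' /\
     subterm_at V (e' ++ [3]) = subterm_at u [3]) -> SE u.
Definition Good t := Prot t /\ EncOK t.
Definition Qp u := match u with Var x => In x (dom σ) | Nm a => ~ In a ns | Priv _ => False | _ => True end.
Definition VOK := Psub Qp.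

Lemma SS_sub t q u : SS t -> subterm_at t q = Some u -> SS u.
Proof.
  intros (V & e & H1 & H2) H3. exists V, (e ++ q). split; auto.
  rewrite (subterm_at_app_some _ _ _ _ H2). auto.
Qed.

Lemma SS_ran V : In V (ran σ) -> SS V.
Proof. intro H. exists V, []. auto. Qed.

Lemma SS_kf u : SS u -> keys_free_of s u.
Proof. intros (V & e & H1 & H2). destruct Hwf as (_ & W2 & _). eapply W2; eauto. Qed.

Lemma SS_nd u : SS u -> ~ is_destructor u.
Proof. intros (V & e & H1 & H2). destruct Hwf as (_ & _ & W3). eapply W3; eauto. Qed.

Lemma ran_var v : In v (ran σ) -> exists x, In x (dom σ) /\ SB (Var x) = v.
Proof.
  intro H. unfold ran in H. apply in_map_iff in H. destruct H as ([x w] & E & H). simpl in E. subst.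
  exists x. split. apply (in_map fst) in H. exact H.
  unfold subst; simpl. erewrite lookup_in; eauto. apply Hfs.
Qed.

Lemma ded_ran v : In v (ran σ) -> ded ns σ v.
Proof. intro H. destruct (ran_var v H) as (x & H1 & H2). rewrite <- H2. constructor. auto. Qed.

Lemma rename_id t : ~ occurs_name s t -> R t = t.
Proof.
  intro H. unfold rename_name. rewrite <- (tmap_id t) at 2. apply tmap_ext.
  intros q l Hq Hl. destruct l; try reflexivity. destruct (Nat.eqb a s) eqn:E; [|reflexivity].
  apply Nat.eqb_eq in E. subst. exfalso. apply H. exists q. auto.
Qed.

Lemma rename_leaf c : leaf c -> c <> Nm s -> R c = c.
Proof.
  intros H1 H2. destruct c; simpl in H1; try contradiction; try reflexivity.
  unfold rename_name. simpl. destruct (Nat.eqb a s) eqn:E; [|reflexivity].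
  apply Nat.eqb_eq in E. subst. tauto.
Qed.

Lemma M_no_ns a q : In a ns -> subterm_at M q = Some (Nm a) -> False.
Proof. intros H1 H2. destruct HMp as [P1 _]. apply (P1 a H1). exists q. auto. Qed.

Lemma rename_Nm c a : R c = Nm a -> In a ns -> c = Nm a.
Proof.
  intros H Ha. destruct (leaf_dec c) as [Hl|Hl].
  - destruct c; simpl in Hl; try contradiction; try (unfold rename_name in H; simpl in H; discriminate).
    unfold rename_name in H. simpl in H. destruct (Nat.eqb a0 s); [|exact H].
    exfalso. apply (M_no_ns a []); auto. simpl. rewrite H. reflexivity.
  - exfalso. unfold rename_name in H. eapply (nonleaf_tmap _ _ Hl). rewrite H. exact I.
Qed.

Lemma ProtS_gen e : forall t, SS t -> ded ns σ t -> subterm_at t e = Some (Nm s) ->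
  exists q q' u, e = q ++ q' /\ subterm_at t q = Some u /\ SE u.
Proof.
  induction e as [|i e IH]; intros t HS Hd He.
  - simpl in He. inversion He; subst. contradiction.
  - destruct i; [discriminate|].
    pose proof (SS_kf _ HS) as K. pose proof (SS_nd _ HS) as D.
    destruct t; simpl in K, D; try (exfalso; apply D; exact I);
    try (simpl in He; rewrite nth_error_nil' in He; discriminate).
    +
      destruct i as [|[|[|i]]]; simpl in He.
      * exists [], (1 :: e), (Enc t1 t2 t3). split; [reflexivity|]. split; [reflexivity|]. split; [exact I|exact HS].
      * exfalso. apply (proj1 K). exists e. auto.
      * exfalso. apply (proj2 K). exists e. auto.
      * rewrite nth_error_nil' in He. discriminate.
    +
      destruct i as [|[|[|i]]]; simpl in He.
      * exists [], (1 :: e), (Enca t1 t2 t3). split; [reflexivity|]. split; [reflexivity|]. split; [exact I|exact HS].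
      * exfalso. apply (proj1 K). exists e. auto.
      * exfalso. apply (proj2 K). exists e. auto.
      * rewrite nth_error_nil' in He. discriminate.
    +
      destruct i as [|i]; simpl in He; [|rewrite nth_error_nil' in He; discriminate].
      exfalso. apply K. exists e. auto.
    +
      destruct i as [|i]; simpl in He; [|rewrite nth_error_nil' in He; discriminate].
      exfalso. apply K. exists e. auto.
    +
      destruct i as [|[|i]]; simpl in He.
      * apply (shift_wit SE (Pair t1 t2) 0 t1); [reflexivity|]. apply IH; auto.
        eapply SS_sub; [exact HS|]. instantiate (1 := [1]). reflexivity.
        apply ded_root with (Pi1 (Pair t1 t2)); [|constructor].
        apply ded_app; [exact I|]. simpl. intros c [<-|[]]. auto.
      * apply (shift_wit SE (Pair t1 t2) 1 t2); [reflexivity|]. apply IH; auto.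
        eapply SS_sub; [exact HS|]. instantiate (1 := [2]). reflexivity.
        apply ded_root with (Pi2 (Pair t1 t2)); [|constructor].
        apply ded_app; [exact I|]. simpl. intros c [<-|[]]. auto.
      * rewrite nth_error_nil' in He. discriminate.
    +
      destruct i as [|[|i]]; simpl in He.
      * apply (shift_wit SE (Sign t1 t2) 0 t1); [reflexivity|]. apply IH; auto.
        eapply SS_sub; [exact HS|]. instantiate (1 := [1]). reflexivity.
        apply ded_root with (Retrieve (Sign t1 t2)); [|constructor].
        apply ded_app; [exact I|]. simpl. intros c [<-|[]]. auto.
      * exfalso. apply K. exists e. auto.
      * rewrite nth_error_nil' in He. discriminate.
Qed.

Lemma Good_SS_free t : SS t -> ~ occurs_name s t -> Good t.
Proof.
  intros HS Hf. split.
  - intros e He. exfalso. apply Hf. exists e. auto.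
  - intros q u Hq Hu _. split; auto. eapply SS_sub; eauto.
Qed.

Lemma Good_SS_ded t : SS t -> ded ns σ t -> Good t.
Proof.
  intros HS Hd. split.
  - intros e He. apply ProtS_gen; auto.
  - intros q u Hq Hu _. split; auto. eapply SS_sub; eauto.
Qed.


Lemma tm1_SB t q u : subterm_at t q = Some u -> subterm_at (SB t) q = Some (SB u).
Proof. intro H. apply tm1. exact H. Qed.
Lemma tm1_R t q u : subterm_at t q = Some u -> subterm_at (R t) q = Some (R u).
Proof. intro H. apply tm1. exact H. Qed.
Lemma rebuild_R t L : ~ leaf t -> rebuild (R t) L = rebuild t L.
Proof. intro H. apply rebuild_tmap. exact H. Qed.
Lemma rebuild_SB t L : ~ leaf t -> rebuild (SB t) L = rebuild t L.
Proof. intro H. apply rebuild_tmap. exact H. Qed.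
Lemma children_R t : ~ leaf t -> children (R t) = map R (children t).
Proof. intro H. apply children_tmap. exact H. Qed.
Lemma nonleaf_R t : ~ leaf t -> ~ leaf (R t).
Proof. intro H. apply nonleaf_tmap. exact H. Qed.
Lemma nonleaf_SB t : ~ leaf t -> ~ leaf (SB t).
Proof. intro H. apply nonleaf_tmap. exact H. Qed.
Lemma rp1_R t p r u : subterm_at t p = Some u -> R (replace_at t p r) = replace_at (R t) p (R r).
Proof. intro H. eapply rp1. exact H. Qed.
Lemma rp1_S τ t p r u : subterm_at t p = Some u -> subst τ (replace_at t p r) = replace_at (subst τ t) p (subst τ r).
Proof. intro H. eapply rp1. exact H. Qed.

Lemma R_Nms : R (Nm s) = M.
Proof. unfold rename_name. simpl. rewrite Nat.eqb_refl. reflexivity. Qed.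

Lemma tm3_R t q u : subterm_at (R t) q = Some u ->
  (exists q1 q2, q = q1 ++ q2 /\ subterm_at t q1 = Some (Nm s) /\ subterm_at M q2 = Some u) \/
  (exists u0, subterm_at t q = Some u0 /\ u0 <> Nm s /\ u = R u0).
Proof.
  intro H. apply tm3 in H.
  destruct H as [(q1 & q2 & l & E1 & E2 & E3 & E4)|(u0 & E1 & E2 & E3)].
  - destruct (classic (l = Nm s)) as [Hs'|Hs'].
    + subst l. left. exists q1, q2. split; auto. split; auto. simpl in E4.
      rewrite Nat.eqb_refl in E4. exact E4.
    + right. exists l. assert (Hrl : R l = l) by (apply rename_leaf; auto).
      unfold rename_name in Hrl. rewrite tmap_leaf in Hrl by auto. rewrite Hrl in E4.
      apply subterm_at_leaf in E4; auto. destruct E4 as [-> ->]. rewrite E1, app_nil_r.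
      split; auto. split; auto. symmetry. apply rename_leaf; auto.
  - right. exists u0. split; auto. split; auto. intro; subst; simpl in E2; auto.
Qed.

Lemma tm3_SB W q u : VOK W -> subterm_at (SB W) q = Some u ->
  (exists q1 q2 x v, q = q1 ++ q2 /\ subterm_at W q1 = Some (Var x) /\ SB (Var x) = v /\
      In v (ran σ) /\ subterm_at v q2 = Some u) \/
  (exists l, subterm_at W q = Some l /\ leaf l /\ (forall x, l <> Var x) /\ Qp l /\ u = l) \/
  (exists u0, subterm_at W q = Some u0 /\ ~ leaf u0 /\ u = SB u0).
Proof.
  intros HW H. apply tm3 in H.
  destruct H as [(q1 & q2 & l & E1 & E2 & E3 & E4)|(u0 & E1 & E2 & E3)].
  - pose proof (HW _ _ E2) as HQ. destruct l; simpl in E3; try contradiction.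
    + simpl in HQ. destruct (lookup_dom σ x HQ) as (v & Lv & Iv). left.
      exists q1, q2, x, v. simpl in E4. rewrite Lv in E4. repeat split; auto.
      unfold subst; simpl. rewrite Lv. reflexivity.
    + right; left. simpl in E4. apply subterm_at_leaf in E4; [|exact I].
      destruct E4 as [-> ->]. exists (Nm a). rewrite E1, app_nil_r. repeat split; auto. discriminate.
    + right; left. simpl in E4. apply subterm_at_leaf in E4; [|exact I].
      destruct E4 as [-> ->]. exists (Cst c). rewrite E1, app_nil_r. repeat split; auto. discriminate.
  - right; right. exists u0. auto.
Qed.

Lemma VOK_child t j c : VOK t -> nth_error (children t) j = Some c -> VOK c.
Proof. apply Psub_child. Qed.

Lemma ded_inst W : VOK W -> ded ns σ (SB W).
Proof.
  induction W as [W IH] using term_ind'. intro HW.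
  pose proof (Psub_root _ _ HW) as HQ.
  destruct (leaf_dec W) as [Hl|Hl].
  - destruct W; simpl in Hl; try contradiction.
    + apply ded_var. exact HQ.
    + apply ded_name. exact HQ.
    + apply ded_app; [exact I|]. simpl. tauto.
  - unfold subst. rewrite tmap_nonleaf by auto. apply ded_app.
    + destruct W; simpl in *; tauto.
    + rewrite children_rebuild by (rewrite length_map; reflexivity).
      intros c Hc. apply in_map_iff in Hc. destruct Hc as (c0 & <- & Hc0).
      apply IH; auto. destruct (In_nth_error _ _ Hc0) as (j & E). eapply VOK_child; eauto.
Qed.

Lemma Good_inst W : VOK W -> Good (SB W).
Proof.
  intro HW. split.
  - intros e He. apply (tm3_SB W e _ HW) in He.
    destruct He as [(q1 & q2 & x & v & E1 & E2 & E3 & E4 & E5)|[(l & E1 & E2 & E3 & E4 & E5)|(u0 & E1 & E2 & E3)]].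
    + destruct (ProtS_gen q2 v (SS_ran v E4) (ded_ran v E4) E5) as (q & q' & u & F1 & F2 & F3).
      exists (q1 ++ q), q', u. split. subst. rewrite app_assoc. reflexivity. split; auto.
      rewrite (subterm_at_app_some _ _ _ _ (tm1_SB _ _ _ E2)). rewrite E3. exact F2.
    + subst l. simpl in E4. tauto.
    + exfalso. apply (nonleaf_SB u0 E2). rewrite <- E3. exact I.
  - intros q u Hq Henc Hex. apply (tm3_SB W q _ HW) in Hq.
    destruct Hq as [(q1 & q2 & x & v & E1 & E2 & E3 & E4 & E5)|[(l & E1 & E2 & E3 & E4 & E5)|(u0 & E1 & E2 & E3)]].
    + split; auto. eapply SS_sub; [apply SS_ran; exact E4| exact E5].
    + subst l. destruct u; simpl in *; tauto.
    + subst u.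
      assert (Henc0 : is_enc u0) by (destruct u0; simpl in *; tauto).
      destruct (enc_third u0 Henc0) as (c & Hc).
      destruct Hex as (V & e' & u' & HV & Hu' & Henc' & H3).
      rewrite (tm1_SB _ _ _ Hc) in H3.
      destruct Hwf as (W1 & _ & _).
      destruct (W1 V e' u' HV Hu' Henc') as [(a & Ha & Hin) Hprob].
      apply in_remove in Hin. destruct Hin as [Hin Hne].
      rewrite Ha in H3. symmetry in H3.
      assert (Hc' : subterm_at W (q ++ [3]) = Some c) by (rewrite (subterm_at_app_some _ _ _ _ E1); exact Hc).
      pose proof (HW _ _ Hc') as HQ.
      destruct c; simpl in H3; try discriminate.
      * simpl in HQ. destruct (lookup_dom σ x HQ) as (v & Lv & Iv). unfold subst in H3; simpl in H3. rewrite Lv in H3. injection H3 as H3. subst v.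
        destruct (Hprob (Nm a) [] Iv) as (q' & F1 & _).
        simpl. rewrite Ha. reflexivity.
        destruct q'; discriminate.
      * injection H3 as H3. subst. simpl in HQ. tauto.
Qed.

Lemma not_Prot_Nms : ~ Prot (Nm s).
Proof.
  intro H. destruct (H [] eq_refl) as (q & q' & u & E1 & E2 & E3).
  destruct q; [|discriminate]. simpl in E2. inversion E2; subst. destruct E3 as [[] _].
Qed.

Lemma match_SE A B : Good B -> SE A -> R A = R B -> A = B.
Proof.
  intros GB [HeA (V1 & e1 & HV1 & HA)] E.
  pose proof Hwf as (W1 & _ & _).
  destruct (W1 V1 e1 A HV1 HA HeA) as [(a0 & Ha0 & Hin) Hprob].
  apply in_remove in Hin. destruct Hin as [Hin Hne].
  pose proof Ha0 as Ha0'.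
  rewrite (subterm_at_app_some _ _ _ _ HA) in Ha0.
  assert (RA3 : subterm_at (R A) [3] = Some (Nm a0)).
  { rewrite (tm1_R _ _ _ Ha0). rewrite rename_leaf; [reflexivity | exact I | congruence]. }
  assert (LA : ~ leaf A) by (apply enc_nonleaf; auto).
  destruct (leaf_dec B) as [LB|LB].
  - exfalso. destruct (classic (B = Nm s)) as [HB|HB].
    + subst B. rewrite R_Nms in E. rewrite E in RA3. apply (M_no_ns a0 [3]); auto.
    + rewrite (rename_leaf B) in E by auto. apply (nonleaf_R A LA). rewrite E. exact LB.
  - assert (HR : forall L, rebuild A L = rebuild B L).
    { intro L. rewrite <- (rebuild_R A L LA), <- (rebuild_R B L LB), E. reflexivity. }
    assert (HeB : is_enc B) by (apply (is_enc_same A B LA HR HeA)).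
    destruct (enc_third B HeB) as (cB & HcB).
    pose proof (tm1_R _ _ _ HcB) as RB3. rewrite <- E, RA3 in RB3.
    inversion RB3 as [RB3']. symmetry in RB3'. apply rename_Nm in RB3'; auto. subst cB.
    destruct GB as [_ EB].
    destruct (EB [] B eq_refl HeB) as [_ (V2 & e2 & HV2 & HB)].
    { exists V1, e1, A. repeat split; auto. rewrite Ha0', HcB. reflexivity. }
    destruct (Hprob V2 (e2 ++ [3]) HV2) as (q' & F1 & F2).
    { rewrite (subterm_at_app_some _ _ _ _ HB), HcB, Ha0'. reflexivity. }
    apply app_inj_tail in F1. destruct F1 as [<- _].
    rewrite HB, HA in F2. congruence.
Qed.

Lemma Good_child t j c : Good t -> ~ SE t -> nth_error (children t) j = Some c -> Good c.
Proof.
  intros [P1 P2] NS E. split.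
  - intros e He. destruct (P1 (S j :: e)) as (q & q' & u & F1 & F2 & F3).
    { simpl. rewrite E. exact He. }
    destruct q as [|k q0].
    + simpl in F2. inversion F2; subst. contradiction.
    + simpl in F1. inversion F1; subst. simpl in F2. rewrite E in F2.
      exists q0, q', u. auto.
  - intros q u Hq Hu Hex. apply (P2 (S j :: q)); auto. simpl. rewrite E. exact Hq.
Qed.

Lemma map_inj_R l1 : forall l2, (forall a, In a l1 -> forall b, In b l2 -> R a = R b -> a = b) ->
  map R l1 = map R l2 -> l1 = l2.
Proof.
  induction l1 as [|a l1 IH]; intros [|b l2] H E; simpl in E; try discriminate; auto.
  inversion E. f_equal.
  - apply H; simpl; auto.
  - apply IH; auto. intros a' Ha' b' Hb'. apply H; simpl; auto.
Qed.

Lemma match_main A : forall B, Good A -> Good B -> R A = R B -> A = B.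
Proof.
  induction A as [A IH] using term_ind'. intros B GA GB E.
  destruct (classic (SE A)) as [HA|HA]; [apply match_SE; auto|].
  destruct (classic (SE B)) as [HB|HB]; [symmetry; apply match_SE; auto|].
  assert (NsA : A <> Nm s) by (intro; subst; apply not_Prot_Nms; apply GA).
  assert (NsB : B <> Nm s) by (intro; subst; apply not_Prot_Nms; apply GB).
  destruct (leaf_dec A) as [LA|LA]; destruct (leaf_dec B) as [LB|LB].
  - rewrite !rename_leaf in E; auto.
  - exfalso. rewrite (rename_leaf A) in E by auto. apply (nonleaf_R B LB). rewrite <- E. exact LA.
  - exfalso. rewrite (rename_leaf B) in E by auto. apply (nonleaf_R A LA). rewrite E. exact LB.
  - assert (HC : children A = children B).
    { apply map_inj_R.
      - intros a Ha b Hb Eab. destruct (In_nth_error _ _ Ha) as (j & Ej).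
        destruct (In_nth_error _ _ Hb) as (k & Ek).
        exact (IH a Ha b (Good_child A j a GA HA Ej) (Good_child B k b GB HB Ek) Eab).
      - rewrite <- !children_R by auto. rewrite E. reflexivity. }
    rewrite <- (rebuild_children A), <- (rebuild_children B), HC.
    rewrite <- (rebuild_R A _ LA), <- (rebuild_R B _ LB), E. reflexivity.
Qed.

Definition Pu u := match u with Nm a => ~ In a ns | Priv _ => False | _ => True end.

Lemma Psub_public t : Psub Pu t -> public ns t.
Proof.
  intro H. split.
  - intros a Ha [p Hp]. exact (H _ _ Hp Ha).
  - intros p u Hp. exact (H _ _ Hp).
Qed.

Lemma VOK_Pu t : VOK t -> Psub Pu t.
Proof. apply Psub_mono. intros u; destruct u; simpl; tauto. Qed.

Lemma Pu_rebuild t L : ~ leaf t -> Pu t -> Pu (rebuild t L).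
Proof. destruct t; simpl; tauto. Qed.
Lemma Qp_rebuild t L : ~ leaf t -> Qp t -> Qp (rebuild t L).
Proof. destruct t; simpl; tauto. Qed.

Lemma fresh_nat (l : list nat) : exists y, ~ In y l.
Proof.
  exists (S (list_max l)). intro H. pose proof (list_max_le l (list_max l)) as [H1 _].
  specialize (H1 (le_n _)). rewrite Forall_forall in H1. specialize (H1 _ H). lia.
Qed.

Definition Concl U V := exists σ' : subst_t,
    frame_subst σ' /\ well_formed ns σ' s /\
    (forall x, In x (dom σ) -> subst σ' (Var x) = subst σ (Var x)) /\
    (forall W, ded ns σ W <-> ded ns σ' W) /\
    exists V', public ns V' /\ V = rename_name s M (subst σ' V') /\
               step (subst σ U) (subst σ' V').

Lemma locate U p l r : VOK U -> subterm_at (R (SB U)) p = Some l -> root_step l r ->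
  exists u0, subterm_at U p = Some u0 /\ ~ leaf u0 /\ l = R (SB u0).
Proof.
  intros HU Hl Hr. apply tm3_R in Hl. destruct Hl as [(q1 & q2 & E1 & E2 & E3)|(u1 & E1 & E2 & E3)].
  - exfalso. apply (HMn (replace_at M q2 r)). exists q2, l, r. auto.
  - pose proof (root_step_destr _ _ Hr) as HD. subst l.
    assert (NL1 : ~ leaf u1).
    { intro Hl1. rewrite rename_leaf in HD by auto. destruct u1; simpl in *; tauto. }
    apply destr_tmap in HD; auto.
    apply (tm3_SB U p u1 HU) in E1.
    destruct E1 as [(q1 & q2 & x & v & F1 & F2 & F3 & F4 & F5)|[(l & F1 & F2 & F3 & F4 & F5)|(u0 & F1 & F2 & F3)]].
    + exfalso. apply (SS_nd u1); [eapply SS_sub; [apply SS_ran; exact F4|exact F5]| exact HD].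
    + subst. contradiction.
    + exists u0. subst. auto.
Qed.

Lemma close_a U p u0 W r : VOK U -> subterm_at U p = Some u0 -> VOK W ->
  root_step (SB u0) (SB W) -> R (SB W) = r -> Concl U (replace_at (R (SB U)) p r).
Proof.
  intros HU Hp HW Hst Hr. exists σ. split; [exact Hfs|]. split; [exact Hwf|].
  split; [reflexivity|]. split; [tauto|].
  exists (replace_at U p W). split.
  - apply Psub_public. apply VOK_Pu. apply (Psub_replace Qp Qp_rebuild U p W u0); auto.
  - split.
    + rewrite (rp1_S σ U p W u0 Hp), (rp1_R (SB U) p (SB W) (SB u0) (tm1_SB _ _ _ Hp)). congruence.
    + exists p, (SB u0), (SB W). split; [apply tm1_SB; auto|]. split; auto. apply (rp1_S σ U p W u0 Hp).
Qed.

Lemma wf_ext y v i r0 : In v (ran σ) -> subterm_at v [i] = Some r0 -> (i = 1 \/ i = 2) ->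
  well_formed ns (σ ++ [(y, r0)]) s.
Proof.
  intros Hv Hr0 Hi.
  assert (Base : forall V, In V (ran (σ ++ [(y, r0)])) -> exists B o, In B (ran σ) /\
     (o = [] \/ o = [i]) /\ forall q, subterm_at V q = subterm_at B (o ++ q)).
  { intros V HV. unfold ran in HV. rewrite map_app in HV. apply in_app_or in HV.
    destruct HV as [HV|[<-|[]]].
    - exists V, []. auto.
    - exists v, [i]. split; auto. split; auto. intro q. rewrite (subterm_at_app_some _ _ _ _ Hr0). reflexivity. }
  destruct Hwf as (W1 & W2 & W3).
  split; [|split].
  - intros V q u HV Hq Henc. destruct (Base V HV) as (B & o & HB & Ho & HVB). rewrite HVB in Hq.
    destruct (W1 B (o ++ q) u HB Hq Henc) as [(a & Ha & Hin) Hprob]. split.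
    + exists a. rewrite HVB, app_assoc. auto.
    + intros V2 p HV2 E. destruct (Base V2 HV2) as (B2 & o2 & HB2 & Ho2 & HVB2).
      rewrite HVB2, HVB, app_assoc in E.
      destruct (Hprob B2 (o2 ++ p) HB2 E) as (q'' & F1 & F2).
      destruct p as [|x p'] using rev_ind.
      * exfalso. rewrite app_nil_r in F1. destruct Ho2 as [->| ->].
        -- destruct q''; discriminate.
        -- destruct q'' as [|z q'']; simpl in F1; inversion F1; [lia|]. destruct q''; discriminate.
      * rewrite app_assoc in F1. apply app_inj_tail in F1. destruct F1 as [F1 ->].
        exists p'. split; auto. rewrite HVB2, HVB, F1. exact F2.
  - intros V q u HV Hq. destruct (Base V HV) as (B & o & HB & _ & HVB). rewrite HVB in Hq. eapply W2; eauto.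
  - intros V q u HV Hq. destruct (Base V HV) as (B & o & HB & _ & HVB). rewrite HVB in Hq. eapply W3; eauto.
Qed.

Lemma ded_iff y r0 : ~ In y (dom σ) -> ded ns σ r0 ->
  forall W, ded ns σ W <-> ded ns (σ ++ [(y, r0)]) W.
Proof.
  intros Hy Hd W. split; intro H; induction H.
  - assert (E : subst (σ ++ [(y, r0)]) (Var x) = subst σ (Var x)) by
      (unfold subst; simpl; rewrite lookup_app_l; auto).
    rewrite <- E. apply ded_var. unfold dom; rewrite map_app; apply in_or_app; auto.
  - apply ded_name; auto.
  - apply ded_app; auto.
  - eapply ded_eq; eauto.
  - unfold dom in H; rewrite map_app in H; apply in_app_or in H. destruct H as [H|[<-|[]]].
    + assert (E : subst (σ ++ [(y, r0)]) (Var x) = subst σ (Var x)) by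
        (unfold subst; simpl; rewrite lookup_app_l; auto).
      rewrite E. apply ded_var. auto.
    + assert (E : subst (σ ++ [(y, r0)]) (Var y) = r0).
      { unfold subst; simpl. rewrite lookup_app_r by auto. rewrite lookup_cons. simpl.
        rewrite Nat.eqb_refl. reflexivity. }
      simpl fst. rewrite E. exact Hd.
  - apply ded_name; auto.
  - apply ded_app; auto.
  - eapply ded_eq; eauto.
Qed.

Lemma close_b U p u0 v i r0 r : VOK U -> subterm_at U p = Some u0 -> In v (ran σ) ->
  subterm_at v [i] = Some r0 -> (i = 1 \/ i = 2) -> ded ns σ r0 ->
  root_step (SB u0) r0 -> R r0 = r -> Concl U (replace_at (R (SB U)) p r).
Proof.
  intros HU Hp Hv Hr0 Hi Hd Hst Hr.
  destruct (fresh_nat (dom σ)) as [y Hy].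
  assert (Ly : subst (σ ++ [(y, r0)]) (Var y) = r0).
  { unfold subst; simpl. rewrite lookup_app_r by auto. rewrite lookup_cons. simpl.
    rewrite Nat.eqb_refl. reflexivity. }
  assert (Lx : forall x, In x (dom σ) -> subst (σ ++ [(y, r0)]) (Var x) = subst σ (Var x)).
  { intros x Hx. unfold subst; simpl. rewrite lookup_app_l; auto. }
  assert (EU : forall W, VOK W -> subst (σ ++ [(y, r0)]) W = SB W).
  { intros W HW. apply tmap_ext. intros q l Hq Hl. pose proof (HW _ _ Hq) as HQ.
    destruct l; simpl in *; try reflexivity; try contradiction.
    rewrite lookup_app_l; auto. }
  exists (σ ++ [(y, r0)]). split; [|split; [|split; [|split]]].
  - split.
    + unfold dom. rewrite map_app. simpl. apply NoDup_app; [apply Hfs| |].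
      * constructor; [intros []|constructor].
      * intros a Ha [<-|[]]. contradiction.
    + intros w Hw. unfold ran in Hw. rewrite map_app in Hw. apply in_app_or in Hw.
      destruct Hw as [Hw|[<-|[]]]; [apply Hfs; auto|].
      intros q x Hq. apply (proj2 Hfs v Hv ([i] ++ q) x). rewrite (subterm_at_app_some _ _ _ _ Hr0). exact Hq.
  - eapply wf_ext; eauto.
  - exact Lx.
  - apply ded_iff; auto.
  - exists (replace_at U p (Var y)).
    assert (E : subst (σ ++ [(y, r0)]) (replace_at U p (Var y)) = replace_at (SB U) p r0).
    { rewrite (rp1_S _ U p (Var y) u0 Hp), EU, Ly by auto. reflexivity. }
    split; [|split].
    + apply Psub_public. apply (Psub_replace Pu Pu_rebuild U p (Var y) u0); auto.
      * apply VOK_Pu; auto.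
      * intros q u Hq. apply subterm_at_leaf in Hq; [|exact I]. destruct Hq as [_ ->]. exact I.
    + rewrite E. rewrite (rp1_R (SB U) p r0 (SB u0) (tm1_SB _ _ _ Hp)). congruence.
    + rewrite E. exists p, (SB u0), r0. split; [apply tm1_SB; auto|]. auto.
Qed.

Lemma decomp X : VOK X -> ~ leaf (R (SB X)) ->
  ~ leaf X \/ exists v, In v (ran σ) /\ SB X = v /\ ~ leaf v.
Proof.
  intros HX NL. destruct (leaf_dec X) as [LX|LX]; [right|left; auto].
  pose proof (Psub_root _ _ HX) as HQ.
  destruct X; simpl in LX; try contradiction.
  - simpl in HQ. destruct (lookup_dom σ x HQ) as (v & Lv & Iv).
    assert (E : SB (Var x) = v) by (unfold subst; simpl; rewrite Lv; reflexivity).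
    exists v. split; auto. split; auto. intro Lv'.
    destruct (classic (v = Nm s)) as [Hv|Hv].
    + apply Hnd. rewrite <- Hv, <- E. constructor. auto.
    + apply NL. rewrite E. rewrite rename_leaf by auto. exact Lv'.
  - exfalso. apply NL. change (SB (Nm a)) with (Nm a). rewrite rename_leaf; [exact I|exact I|].
    intro H. injection H as H. subst. simpl in HQ. tauto.
Qed.

Lemma priv_match Y z : VOK Y -> R (SB Y) = Priv z ->
  exists w, SB Y = Priv w /\ SS w /\ ~ occurs_name s w /\ z = w.
Proof.
  intros HY E. destruct (decomp Y HY) as [LY|(v & Hv & Ev & Lv)]; [rewrite E; simpl; tauto| |].
  - exfalso. destruct Y; try (apply LY; exact I); simpl in E; try discriminate.
    pose proof (Psub_root _ _ HY) as H. simpl in H. exact H.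
  - rewrite Ev in E. destruct v; try (exfalso; apply Lv; exact I); simpl in E; try discriminate.
    injection E as E. change (R v = z) in E. pose proof (SS_kf _ (SS_ran _ Hv)) as K. simpl in K.
    exists v. split; auto. split; [|split; auto].
    + apply (SS_sub (Priv v) [1]); [apply SS_ran; exact Hv| reflexivity].
    + rewrite <- E. apply rename_id. auto.
Qed.

Lemma pub_match Z w : VOK Z -> R (SB Z) = Pub w -> SS w -> ~ occurs_name s w -> SB Z = Pub w.
Proof.
  intros HZ E Sw Fw. destruct (decomp Z HZ) as [LZ|(v & Hv & Ev & Lv)]; [rewrite E; simpl; tauto| |].
  - destruct Z; try (exfalso; apply LZ; exact I); simpl in E; try discriminate.
    injection E as E. change (R (SB Z) = w) in E.
    change (SB (Pub Z)) with (Pub (SB Z)). f_equal.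
    apply match_main.
    + apply Good_inst. apply (VOK_child (Pub Z) 0); auto.
    + apply Good_SS_free; auto.
    + rewrite (rename_id w Fw). exact E.
  - rewrite Ev in E |- *. destruct v; try (exfalso; apply Lv; exact I); simpl in E; try discriminate.
    injection E as E. change (R v = w) in E. pose proof (SS_kf _ (SS_ran _ Hv)) as K. simpl in K.
    rewrite rename_id in E by auto. subst. reflexivity.
Qed.

Lemma VOK_Cst c : VOK (Cst c).
Proof. intros q u Hq. apply subterm_at_leaf in Hq; [|exact I]. destruct Hq as [_ ->]. exact I. Qed.

Lemma ded_app_l t : app_not_priv t -> (forall c, In c (children t) -> ded ns σ c) -> ded ns σ t.
Proof. apply ded_app. Qed.

Lemma cases U p u0 r : VOK U -> subterm_at U p = Some u0 -> ~ leaf u0 ->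
  root_step (R (SB u0)) r -> Concl U (replace_at (R (SB U)) p r).
Proof.
  intros HU Hp NL Hr.
  assert (H0 : VOK u0) by (eapply Psub_sub; eauto).
  pose proof (root_step_destr _ _ Hr) as HD.
  destruct u0; try (exfalso; apply NL; exact I); simpl in HD; try contradiction.
  -
    rename u0_1 into X, u0_2 into Y.
    assert (HX : VOK X) by (apply (VOK_child (Dec X Y) 0); auto).
    assert (HY : VOK Y) by (apply (VOK_child (Dec X Y) 1); auto).
    change (R (SB (Dec X Y))) with (Dec (R (SB X)) (R (SB Y))) in Hr.
    apply inv_dec in Hr. destruct Hr as (z & Hz).
    destruct (decomp X HX) as [LX|(v & Hv & Ev & Lv)]; [rewrite Hz; simpl; tauto| |].
    + destruct X; try (exfalso; apply LX; exact I); simpl in Hz; try discriminate.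
      injection Hz as E1 E2 E3. change (R (SB X1) = r) in E1. change (R (SB X2) = R (SB Y)) in E2.
      assert (E : SB X2 = SB Y).
      { apply match_main; auto; apply Good_inst; auto. apply (VOK_child (Enc X1 X2 X3) 1); auto. }
      apply (close_a U p (Dec (Enc X1 X2 X3) Y) X1 r); auto.
      * apply (VOK_child (Enc X1 X2 X3) 0); auto.
      * change (SB (Dec (Enc X1 X2 X3) Y)) with (Dec (Enc (SB X1) (SB X2) (SB X3)) (SB Y)).
        rewrite E. constructor.
    + rewrite Ev in Hz. destruct v; try (exfalso; apply Lv; exact I); simpl in Hz; try discriminate.
      injection Hz as E1 E2 E3. change (R v1 = r) in E1. change (R v2 = R (SB Y)) in E2.
      pose proof (SS_kf _ (SS_ran _ Hv)) as K. simpl in K.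
      assert (E : v2 = SB Y).
      { apply match_main; auto; [|apply Good_inst; auto].
        apply Good_SS_free; [|tauto]. apply (SS_sub (Enc v1 v2 v3) [2]); [apply SS_ran; auto|reflexivity]. }
      apply (close_b U p (Dec X Y) (Enc v1 v2 v3) 1 v1 r); auto.
      * apply ded_root with (Dec (Enc v1 v2 v3) v2); [|constructor].
        apply ded_app; [exact I|]. simpl. intros c [<-|[<-|[]]].
        -- apply ded_ran; auto.
        -- rewrite E. apply ded_inst; auto.
      * change (SB (Dec X Y)) with (Dec (SB X) (SB Y)). rewrite Ev, <- E. constructor.
  -
    rename u0_1 into X, u0_2 into Y.
    assert (HX : VOK X) by (apply (VOK_child (Deca X Y) 0); auto).
    assert (HY : VOK Y) by (apply (VOK_child (Deca X Y) 1); auto).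
    change (R (SB (Deca X Y))) with (Deca (R (SB X)) (R (SB Y))) in Hr.
    apply inv_deca in Hr. destruct Hr as (z2 & z3 & Hx & Hy).
    destruct (priv_match Y z2 HY Hy) as (w & EY & Sw & Fw & ->).
    destruct (decomp X HX) as [LX|(v & Hv & Ev & Lv)]; [rewrite Hx; simpl; tauto| |].
    + destruct X; try (exfalso; apply LX; exact I); simpl in Hx; try discriminate.
      injection Hx as E1 E2 E3. change (R (SB X1) = r) in E1. change (R (SB X2) = Pub w) in E2.
      apply pub_match in E2; auto; [|apply (VOK_child (Enca X1 X2 X3) 1); auto].
      apply (close_a U p (Deca (Enca X1 X2 X3) Y) X1 r); auto.
      * apply (VOK_child (Enca X1 X2 X3) 0); auto.
      * change (SB (Deca (Enca X1 X2 X3) Y)) with (Deca (Enca (SB X1) (SB X2) (SB X3)) (SB Y)).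
        rewrite E2, EY. constructor.
    + rewrite Ev in Hx. destruct v; try (exfalso; apply Lv; exact I); simpl in Hx; try discriminate.
      injection Hx as E1 E2 E3. change (R v1 = r) in E1. change (R v2 = Pub w) in E2.
      pose proof (SS_kf _ (SS_ran _ Hv)) as K. simpl in K.
      rewrite rename_id in E2 by tauto. subst v2.
      apply (close_b U p (Deca X Y) (Enca v1 (Pub w) v3) 1 v1 r); auto.
      * apply ded_root with (Deca (Enca v1 (Pub w) v3) (Priv w)); [|constructor].
        apply ded_app; [exact I|]. simpl. intros c [<-|[<-|[]]].
        -- apply ded_ran; auto.
        -- rewrite <- EY. apply ded_inst; auto.
      * change (SB (Deca X Y)) with (Deca (SB X) (SB Y)). rewrite Ev, EY. constructor.
  -
    rename u0 into X.
    assert (HX : VOK X) by (apply (VOK_child (Pi1 X) 0); auto).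
    change (R (SB (Pi1 X))) with (Pi1 (R (SB X))) in Hr.
    apply inv_pi1 in Hr. destruct Hr as (z & Hz).
    destruct (decomp X HX) as [LX|(v & Hv & Ev & Lv)]; [rewrite Hz; simpl; tauto| |].
    + destruct X; try (exfalso; apply LX; exact I); simpl in Hz; try discriminate.
      injection Hz as E1 E2. change (R (SB X1) = r) in E1.
      apply (close_a U p (Pi1 (Pair X1 X2)) X1 r); auto.
      * apply (VOK_child (Pair X1 X2) 0); auto.
      * change (SB (Pi1 (Pair X1 X2))) with (Pi1 (Pair (SB X1) (SB X2))). constructor.
    + rewrite Ev in Hz. destruct v; try (exfalso; apply Lv; exact I); simpl in Hz; try discriminate.
      injection Hz as E1 E2. change (R v1 = r) in E1.
      apply (close_b U p (Pi1 X) (Pair v1 v2) 1 v1 r); auto.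
      * apply ded_root with (Pi1 (Pair v1 v2)); [|constructor].
        apply ded_app; [exact I|]. simpl. intros c [<-|[]]. apply ded_ran; auto.
      * change (SB (Pi1 X)) with (Pi1 (SB X)). rewrite Ev. constructor.
  -
    rename u0 into X.
    assert (HX : VOK X) by (apply (VOK_child (Pi2 X) 0); auto).
    change (R (SB (Pi2 X))) with (Pi2 (R (SB X))) in Hr.
    apply inv_pi2 in Hr. destruct Hr as (z & Hz).
    destruct (decomp X HX) as [LX|(v & Hv & Ev & Lv)]; [rewrite Hz; simpl; tauto| |].
    + destruct X; try (exfalso; apply LX; exact I); simpl in Hz; try discriminate.
      injection Hz as E1 E2. change (R (SB X2) = r) in E2.
      apply (close_a U p (Pi2 (Pair X1 X2)) X2 r); auto.
      * apply (VOK_child (Pair X1 X2) 1); auto.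
      * change (SB (Pi2 (Pair X1 X2))) with (Pi2 (Pair (SB X1) (SB X2))). constructor.
    + rewrite Ev in Hz. destruct v; try (exfalso; apply Lv; exact I); simpl in Hz; try discriminate.
      injection Hz as E1 E2. change (R v2 = r) in E2.
      apply (close_b U p (Pi2 X) (Pair v1 v2) 2 v2 r); auto.
      * apply ded_root with (Pi2 (Pair v1 v2)); [|constructor].
        apply ded_app; [exact I|]. simpl. intros c [<-|[]]. apply ded_ran; auto.
      * change (SB (Pi2 X)) with (Pi2 (SB X)). rewrite Ev. constructor.
  -
    rename u0_1 into X, u0_2 into Y, u0_3 into Z.
    assert (HX : VOK X) by (apply (VOK_child (Check X Y Z) 0); auto).
    assert (HY : VOK Y) by (apply (VOK_child (Check X Y Z) 1); auto).
    assert (HZ : VOK Z) by (apply (VOK_child (Check X Y Z) 2); auto).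
    change (R (SB (Check X Y Z))) with (Check (R (SB X)) (R (SB Y)) (R (SB Z))) in Hr.
    apply inv_check in Hr. destruct Hr as (z & Hy & Hz & ->).
    assert (HYw : exists w, SB Y = Sign (SB X) (Priv w) /\ SS w /\ ~ occurs_name s w /\ z = w).
    { destruct (decomp Y HY) as [LY|(v & Hv & Ev & Lv)]; [rewrite Hy; simpl; tauto| |].
      - destruct Y; try (exfalso; apply LY; exact I); simpl in Hy; try discriminate.
        injection Hy as E1 E2. change (R (SB Y1) = R (SB X)) in E1. change (R (SB Y2) = Priv z) in E2.
        destruct (priv_match Y2 z (VOK_child (Sign Y1 Y2) 1 Y2 HY eq_refl) E2) as (w & EY2 & Sw & Fw & ->).
        exists w. split; auto.
        change (SB (Sign Y1 Y2)) with (Sign (SB Y1) (SB Y2)). rewrite EY2. f_equal.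
        apply match_main; auto; apply Good_inst; auto. apply (VOK_child (Sign Y1 Y2) 0); auto.
      - rewrite Ev in Hy. destruct v; try (exfalso; apply Lv; exact I); simpl in Hy; try discriminate.
        injection Hy as E1 E2. change (R v1 = R (SB X)) in E1. change (R v2 = Priv z) in E2.
        pose proof (SS_kf _ (SS_ran _ Hv)) as K. simpl in K.
        rewrite rename_id in E2 by tauto. subst v2.
        assert (SP : SS (Priv z)) by (apply (SS_sub (Sign v1 (Priv z)) [2]); [apply SS_ran; auto|reflexivity]).
        pose proof (SS_kf _ SP) as K2. simpl in K2.
        exists z. split; [|split; [|split; auto]].
        + rewrite Ev. f_equal. apply match_main; auto; [|apply Good_inst; auto].
          apply Good_SS_ded.
          * apply (SS_sub (Sign v1 (Priv z)) [1]); [apply SS_ran; auto|reflexivity].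
          * apply ded_root with (Retrieve (Sign v1 (Priv z))); [|constructor].
            apply ded_app; [exact I|]. simpl. intros c [<-|[]]. apply ded_ran; auto.
        + apply (SS_sub (Priv z) [1]); [auto|reflexivity]. }
    destruct HYw as (w & EY & Sw & Fw & ->).
    pose proof (pub_match Z w HZ Hz Sw Fw) as EZ.
    apply (close_a U p (Check X Y Z) (Cst 0) ok); auto.
    + apply VOK_Cst.
    + change (SB (Check X Y Z)) with (Check (SB X) (SB Y) (SB Z)). rewrite EY, EZ.
      change (SB (Cst 0)) with ok. constructor.
  -
    rename u0 into X.
    assert (HX : VOK X) by (apply (VOK_child (Retrieve X) 0); auto).
    change (R (SB (Retrieve X))) with (Retrieve (R (SB X))) in Hr.
    apply inv_ret in Hr. destruct Hr as (z & Hz).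
    destruct (decomp X HX) as [LX|(v & Hv & Ev & Lv)]; [rewrite Hz; simpl; tauto| |].
    + destruct X; try (exfalso; apply LX; exact I); simpl in Hz; try discriminate.
      injection Hz as E1 E2. change (R (SB X1) = r) in E1.
      apply (close_a U p (Retrieve (Sign X1 X2)) X1 r); auto.
      * apply (VOK_child (Sign X1 X2) 0); auto.
      * change (SB (Retrieve (Sign X1 X2))) with (Retrieve (Sign (SB X1) (SB X2))). constructor.
    + rewrite Ev in Hz. destruct v; try (exfalso; apply Lv; exact I); simpl in Hz; try discriminate.
      injection Hz as E1 E2. change (R v1 = r) in E1.
      apply (close_b U p (Retrieve X) (Sign v1 v2) 1 v1 r); auto.
      * apply ded_root with (Retrieve (Sign v1 v2)); [|constructor].
        apply ded_app; [exact I|]. simpl. intros c [<-|[]]. apply ded_ran; auto.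
      * change (SB (Retrieve X)) with (Retrieve (SB X)). rewrite Ev. constructor.
Qed.

Lemma main_sec U V : VOK U -> step (R (SB U)) V -> Concl U V.
Proof.
  intros HU (p & l & r & Hl & Hr & ->).
  destruct (locate U p l r HU Hl Hr) as (u0 & E1 & E2 & ->).
  apply (cases U p u0 r); auto.
Qed.

End Main.

Theorem lemma2p8 (ns : list nat) (σ : subst_t) (s : nat) (U M V : term) :
  frame_subst σ ->
  In s ns ->
  well_formed ns σ s ->
  ~ ded ns σ (Nm s) ->
  (forall p x, subterm_at U p = Some (Var x) -> In x (dom σ)) ->
  closed M -> normal_form M ->
  public ns U -> public ns M ->
  step (rename_name s M (subst σ U)) V ->
  exists σ' : subst_t,
    frame_subst σ' /\ well_formed ns σ' s /\
    (forall x, In x (dom σ) -> subst σ' (Var x) = subst σ (Var x)) /\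
    (forall W, ded ns σ W <-> ded ns σ' W) /\
    exists V', public ns V' /\ V = rename_name s M (subst σ' V') /\
               step (subst σ U) (subst σ' V').
Proof.
  intros Hfs Hs Hwf Hnd HV HMc HMn HU HMp Hst.
  assert (HVOK : VOK ns σ U).
  { intros q u Hq. unfold Qp. destruct u; auto.
    - exact (HV q x Hq).
    - intro Ha. apply (proj1 HU a Ha). exists q. auto.
    - apply (proj2 HU q u Hq). }
  exact (main_sec ns σ s M Hfs Hs Hwf Hnd HMn HMp U V HVOK Hst).
Qed.
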